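(* For all integers $m,n\geq 1$, \[p^{ed}_{od}(m,2n)-p^{ed}_{od}(m,2n-1)=-D_o(m,2n-1).\]
   Context: $\mathcal{P}^{ed}_{od}$ is the set of integer partitions such that: - all parts are distinct; - every odd part is smaller than every even part; - at least one odd part appears. $p^{ed}_{od}(m,n)$ is the number of partitions of $n$ in $\mathcal{P}^{ed}_{od}$ with exactly $m$ parts. $D_o(m,n)$ is the number of partitions of $n$ into exactly $m$ distinct odd parts. *)

(* Defs.v *)
From mathcomp Require Import all_boot all_order all_algebra.
Set Implicit Arguments. Unset Strict Implicit. Unset Printing Implicit Defensive.

(* A partition of n into distinct parts is encoded as its set of parts,
   a subset S of {0,...,n} (as 'I_n.+1) with 0 \notin S and
   \sum_(i in S) i = n.  The number of parts is #|S|. *)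

Definition distinct_partition (n : nat) (S : {set 'I_n.+1}) : bool :=
  (ord0 \notin S) && (\sum_(i in S) (i : nat) == n).

Definition in_Ped_od (n : nat) (S : {set 'I_n.+1}) : bool :=
  distinct_partition S &&
  [forall i in S, forall j in S, odd i ==> ~~ odd j ==> (i < j)%N] &&
  [exists i in S, odd i].

Definition p_ed_od (m n : nat) : nat :=
  #|[set S : {set 'I_n.+1} | in_Ped_od S & #|S| == m]|.

Definition D_o (m n : nat) : nat :=
  #|[set S : {set 'I_n.+1} | [&& distinct_partition S,
                                 [forall i in S, odd i] & #|S| == m]]|.

(* Main.v *)
Require Import Defs.
From mathcomp Require Import all_boot all_order all_algebra.
From mathcomp Require Import zify.
Set Implicit Arguments. Unset Strict Implicit. Unset Printing Implicit Defensive.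

Lemma card_bij (aT bT : finType) (A : {set aT}) (B : {set bT}) (f : aT -> bT) (g : bT -> aT) :
  {in A, forall x, f x \in B} -> {in B, forall y, g y \in A} ->
  {in A, cancel f g} -> {in B, cancel g f} -> #|A| = #|B|.
Proof.
move=> fA gB fK gK; apply/eqP; rewrite eqn_leq; apply/andP; split.
  rewrite -(card_in_imset (can_in_inj fK)); apply: subset_leq_card.
  by apply/subsetP=> _ /imsetP[x xA ->]; exact: fA.
rewrite -(card_in_imset (can_in_inj gK)); apply: subset_leq_card.
by apply/subsetP=> _ /imsetP[x xA ->]; exact: gB.
Qed.

Section Gen.
Variable k : nat.
Implicit Types S : {set 'I_k.+1}.

Lemma ped_pos S : in_Ped_od S -> forall x, x \in S -> 0 < x.
Proof.
case/andP=> /andP[/andP[n0 _] _] _ x xS; rewrite lt0n; apply/negP=> /eqP x0.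
have : x = ord0 by apply: val_inj. by move=> e; move: n0; rewrite -e xS.
Qed.

Lemma ped_sum S : in_Ped_od S -> \sum_(i in S) (i : nat) = k.
Proof. by case/andP=> /andP[/andP[_ /eqP]]. Qed.

Lemma ped_ord S : in_Ped_od S -> forall x y, x \in S -> y \in S -> odd x -> ~~ odd y -> x < y.
Proof.
case/andP=> /andP[_ /forall_inP H] _ x y xS yS ox ey.
by move: (H x xS) => /forall_inP /(_ y yS); rewrite ox ey.
Qed.

Lemma ped_ex S : in_Ped_od S -> exists2 x, x \in S & odd x.
Proof. by case/andP=> _ /exists_inP. Qed.

Lemma ped_intro S : (forall x, x \in S -> 0 < x) -> \sum_(i in S) (i : nat) = k ->
  (forall x y, x \in S -> y \in S -> odd x -> ~~ odd y -> x < y) ->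
  (exists2 x, x \in S & odd x) -> in_Ped_od S.
Proof.
move=> Hp Hs Ho [x xS ox]; rewrite /in_Ped_od /distinct_partition Hs eqxx andbT.
apply/andP; split; last by apply/exists_inP; exists x.
apply/andP; split; first by apply/negP=> /Hp.
apply/forall_inP=> i iS; apply/forall_inP=> j jS; apply/implyP=> oi; apply/implyP=> ej.
exact: Ho.
Qed.
End Gen.

Lemma elem_le_sum K (S : {set 'I_K}) x : x \in S -> (x : nat) <= \sum_(i in S) (i : nat).
Proof. by move=> xS; rewrite (bigD1 x) //= leq_addr. Qed.

Lemma elem2_le_sum K (S : {set 'I_K}) x y : x \in S -> y \in S -> x != y ->
  (x : nat) + y <= \sum_(i in S) (i : nat).
Proof.
move=> xS yS xy; rewrite (bigD1 x) //= (bigD1 y) /=; last by rewrite yS eq_sym.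
by rewrite addnA leq_addr.
Qed.

Definition isLO K (S : {set 'I_K}) (x : 'I_K) : bool :=
  odd x && [forall y, (y \in S) ==> odd y ==> (y <= x)].
Definition isSE K (S : {set 'I_K}) (x : 'I_K) : bool :=
  ~~ odd x && [forall y, (y \in S) ==> ~~ odd y ==> (x <= y)].

Lemma isLOP K (S : {set 'I_K}) (x : 'I_K) : reflect (odd x /\ forall y : 'I_K, y \in S -> odd y -> y <= x) (isLO S x).
Proof.
apply: (iffP andP) => [[ox /forallP H]|[ox H]]; split=> //.
  by move=> y yS oy; move: (H y); rewrite yS oy.
by apply/forallP=> y; apply/implyP=> yS; apply/implyP=> oy; exact: H.
Qed.

Lemma isSEP K (S : {set 'I_K}) (x : 'I_K) : reflect (~~ odd x /\ forall y : 'I_K, y \in S -> ~~ odd y -> x <= y) (isSE S x).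
Proof.
apply: (iffP andP) => [[ox /forallP H]|[ox H]]; split=> //.
  by move=> y yS oy; move: (H y); rewrite yS oy.
by apply/forallP=> y; apply/implyP=> yS; apply/implyP=> oy; exact: H.
Qed.

Lemma exLO K (S : {set 'I_K}) : (exists2 x, x \in S & odd x) -> exists2 o, o \in S & isLO S o.
Proof.
move=> [x xS ox].
have P0 : (x \in S) && odd x by rewrite xS ox.
case: (@arg_maxnP _ x (fun i => (i \in S) && odd i) (fun i : 'I_K => val i) P0) => o /andP[oS oo] H.
exists o => //; apply/isLOP; split=> // y yS oy; by apply: H; rewrite yS oy.
Qed.

Lemma exSE K (S : {set 'I_K}) : (exists2 x, x \in S & ~~ odd x) -> exists2 o, o \in S & isSE S o.
Proof.
move=> [x xS ox].
have P0 : (x \in S) && ~~ odd x by rewrite xS ox.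
case: (@arg_minnP _ x (fun i => (i \in S) && ~~ odd i) (fun i : 'I_K => val i) P0) => o /andP[oS oo] H.
exists o => //; apply/isSEP; split=> // y yS oy; by apply: H; rewrite yS oy.
Qed.

Section Main.
Variable N : nat.
Hypothesis oddN : odd N.

Definition vF (S : {set 'I_N.+2}) (x : 'I_N.+2) : nat := if isLO S x then x.-1 else x.
Definition gF (S : {set 'I_N.+2}) (x : 'I_N.+2) : 'I_N.+1 := inord (vF S x).
Definition FF (S : {set 'I_N.+2}) : {set 'I_N.+1} := gF S @: S.

Definition vG (T : {set 'I_N.+1}) (y : 'I_N.+1) : nat := if isSE T y then y.+1 else y.
Definition gG (T : {set 'I_N.+1}) (y : 'I_N.+1) : 'I_N.+2 := inord (vG T y).
Definition GG (T : {set 'I_N.+1}) : {set 'I_N.+2} := gG T @: T.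

Lemma sum_even K (S : {set 'I_K}) (P : pred 'I_K) :
  (forall y, y \in S -> P y -> ~~ odd y) -> ~~ odd (\sum_(i in S | P i) (i : nat)).
Proof.
move=> H; apply: (big_ind (fun n => ~~ odd n)) => //.
  by move=> a b; rewrite oddD => /negbTE -> /negbTE ->.
by move=> i /andP[]; apply: H.
Qed.

Section SideA.
Variable S : {set 'I_N.+2}.
Hypothesis vS : in_Ped_od S.

Lemma A_le x : x \in S -> (x : nat) <= N.
Proof.
move=> xS; rewrite leqNgt; apply/negP=> xN.
have xe : (x : nat) = N.+1 by have := ltn_ord x; lia.
have [o oS oo] := ped_ex vS.
have ox : o != x by apply/negP=> /eqP e; move: oo; rewrite e xe /= oddN.
have := elem2_le_sum oS xS ox; rewrite (ped_sum vS) xe.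
have := ped_pos vS oS; lia.
Qed.

Lemma LO_uniq x y : x \in S -> y \in S -> isLO S x -> isLO S y -> x = y.
Proof.
move=> xS yS /isLOP[ox Hx] /isLOP[oy Hy]; apply: val_inj; apply/eqP.
by rewrite eqn_leq Hx // Hy.
Qed.

Variable o : 'I_N.+2.
Hypothesis oS : o \in S.
Hypothesis oLO : isLO S o.

Lemma LO_eq x : x \in S -> isLO S x = (x == o).
Proof.
move=> xS; case: eqP => [->//|ne]; apply/negP=> H; apply: ne.
exact: LO_uniq.
Qed.

Lemma A_second : exists2 y, y \in S & odd y && (y != o).
Proof.
case: (boolP [exists y, (y \in S) && (odd y && (y != o))]).
  by move=> /existsP[y /andP[yS H]]; exists y.
rewrite negb_exists => /forallP H.
have := ped_sum vS; rewrite (bigD1 o) //=.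
have : ~~ odd (\sum_(i in S | i != o) (i : nat)).
  apply: sum_even => y yS yo; move: (H y); rewrite yS yo andbT /=.
  by move/negbTE => ->.
have oo : odd o by case/andP: oLO.
move=> He Hs; have := congr1 odd Hs; rewrite oddD oo (negbTE He) /= oddN.
by [].
Qed.

Lemma o_ge2 : 2 <= o.
Proof.
have [y yS /andP[oy yo]] := A_second.
have := ped_pos vS yS; case/isLOP: oLO => _ /(_ y yS oy).
move: yo; rewrite -(inj_eq val_inj) /=; lia.
Qed.

Lemma oodd : odd o. Proof. by case/andP: oLO. Qed.

Lemma vF_eq x : x \in S -> vF S x = if x == o then o.-1 else x.
Proof. by move=> xS; rewrite /vF LO_eq //; case: eqP => [->|]. Qed.

Lemma gF_val x : x \in S -> nat_of_ord (gF S x) = vF S x.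
Proof.
move=> xS; rewrite /gF inordK // ltnS vF_eq //.
case: (eqVneq x o) => [_|_]; last exact: A_le.
by have := A_le oS; lia.
Qed.

Lemma gF_inj : {in S &, injective (gF S)}.
Proof.
move=> x y xS yS /(congr1 (@nat_of_ord _)); rewrite !gF_val // !vF_eq //.
have oo := oodd; have o2 := o_ge2.
case: (eqVneq x o) => [->|xo]; case: (eqVneq y o) => [->|yo] //.
- move=> e; have ey : ~~ odd y by rewrite -e; lia.
  have := ped_ord vS oS yS oo ey; lia.
- move=> e; have ey : ~~ odd x by rewrite e; lia.
  have := ped_ord vS oS xS oo ey; lia.
- by move/val_inj.
Qed.

Lemma mem_FF (i : 'I_N.+1) : reflect (exists2 x, x \in S & (i : nat) = vF S x) (i \in FF S).
Proof.
apply: (iffP imsetP) => [[x xS ->]|[x xS e]]; exists x => //.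
  by rewrite gF_val.
by apply: val_inj => /=; rewrite gF_val.
Qed.

Lemma FF_sum : \sum_(i in FF S) (i : nat) = N.
Proof.
rewrite big_imset /=; last exact: gF_inj.
rewrite (eq_bigr (vF S)); last by move=> x xS; rewrite gF_val.
have := ped_sum vS; rewrite (bigD1 o) //= => Hs.
rewrite (bigD1 o) //= (eq_bigr (fun i : 'I_N.+2 => (i : nat))); last first.
  by move=> x /andP[xS xo]; rewrite vF_eq // (negbTE xo).
rewrite vF_eq // eqxx; have := o_ge2; lia.
Qed.

Lemma FF_ped : in_Ped_od (FF S).
Proof.
have oo := oodd; have o2 := o_ge2.
apply: ped_intro.
- move=> z /mem_FF[x xS ->]; rewrite vF_eq //; case: (eqVneq x o) => _; first lia.
  exact: (ped_pos vS xS).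
- exact: FF_sum.
- move=> z1 z2 /mem_FF[x1 x1S ->] /mem_FF[x2 x2S ->]; rewrite !vF_eq //.
  case: (eqVneq x1 o) => [_|x1o]; first lia.
  move=> ox1; have x1o' : (x1 : nat) < o.
    case/isLOP: oLO => _ /(_ x1 x1S ox1); move: x1o; rewrite -(inj_eq val_inj) /=; lia.
  case: (eqVneq x2 o) => [_ _|_ ex2]; first lia.
  exact: (ped_ord vS x1S x2S ox1 ex2).
- have [y yS /andP[oy yo]] := A_second.
  exists (gF S y); first exact: imset_f.
  by rewrite gF_val // vF_eq // (negbTE yo).
Qed.

Lemma FF_even : [exists y in FF S, ~~ odd y].
Proof.
apply/exists_inP; exists (gF S o); first exact: imset_f.
rewrite gF_val // vF_eq // eqxx; have := o_ge2; have := oodd; lia.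
Qed.

Lemma FF_card : #|FF S| = #|S|.
Proof. exact: card_in_imset gF_inj. Qed.

End SideA.

Lemma gG_val (T : {set 'I_N.+1}) x : nat_of_ord (gG T x) = vG T x.
Proof.
rewrite /gG inordK // ltnS /vG; case: ifP => _; have := ltn_ord x; lia.
Qed.

Section SideB.
Variable T : {set 'I_N.+1}.
Hypothesis vT : in_Ped_od T.
Variable e : 'I_N.+1.
Hypothesis eT : e \in T.
Hypothesis eSE : isSE T e.

Lemma SE_eq x : x \in T -> isSE T x = (x == e).
Proof.
move=> xT; case: (eqVneq x e) => [->//|/eqP ne]; apply/negP=> /isSEP[ox Hx]; apply: ne.
case/isSEP: eSE => oe He; apply: val_inj; apply/eqP.
by rewrite eqn_leq Hx // He.
Qed.

Lemma eeven : ~~ odd e. Proof. by case/andP: eSE. Qed.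

Lemma vG_eq x : x \in T -> vG T x = if x == e then e.+1 else x.
Proof. by move=> xT; rewrite /vG SE_eq //; case: (eqVneq x e) => [->|]. Qed.


Lemma gG_inj : {in T &, injective (gG T)}.
Proof.
move=> x y xT yT /(congr1 (@nat_of_ord _)); rewrite !gG_val // !vG_eq //.
have ee := eeven.
case: (eqVneq x e) => [->|xo]; case: (eqVneq y e) => [->|yo] //.
- move=> E; have oy : odd y by rewrite -E /=.
  have := ped_ord vT yT eT oy ee; lia.
- move=> E; have ox : odd x by rewrite E /=.
  have := ped_ord vT xT eT ox ee; lia.
- by move/val_inj.
Qed.

Lemma mem_GG (i : 'I_N.+2) : reflect (exists2 x, x \in T & (i : nat) = vG T x) (i \in GG T).
Proof.
apply: (iffP imsetP) => [[x xT ->]|[x xT E]]; exists x => //.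
  by rewrite gG_val.
by apply: val_inj => /=; rewrite gG_val.
Qed.

Lemma GG_sum : \sum_(i in GG T) (i : nat) = N.+1.
Proof.
rewrite big_imset /=; last exact: gG_inj.
rewrite (eq_bigr (vG T)); last by move=> x xT; rewrite gG_val.
have := ped_sum vT; rewrite (bigD1 e) //= => Hs.
rewrite (bigD1 e) //= (eq_bigr (fun i : 'I_N.+1 => (i : nat))); last first.
  by move=> x /andP[xT xo]; rewrite vG_eq // (negbTE xo).
rewrite vG_eq // eqxx; lia.
Qed.

Lemma GG_ped : in_Ped_od (GG T).
Proof.
have ee := eeven.
apply: ped_intro.
- move=> z /mem_GG[x xT ->]; rewrite vG_eq //; case: (eqVneq x e) => _; first lia.
  exact: (ped_pos vT xT).
- exact: GG_sum.
- move=> z1 z2 /mem_GG[x1 x1T ->] /mem_GG[x2 x2T ->]; rewrite !vG_eq //.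
  case: (eqVneq x2 e) => [_ /=|x2e]; first by move=> _; rewrite ee.
  move=> + ex2; have ex2' : (e : nat) < x2.
    case/isSEP: eSE => _ /(_ x2 x2T ex2); move: x2e; rewrite -(inj_eq val_inj) /=; lia.
  case: (eqVneq x1 e) => [_ _|_ ox1]; first lia.
  exact: (ped_ord vT x1T x2T ox1 ex2).
- have [y yT oy] := ped_ex vT.
  have ye : y != e by apply/negP=> /eqP E; move: oy; rewrite E (negbTE ee).
  exists (gG T y); first exact: imset_f.
  by rewrite gG_val // vG_eq // (negbTE ye).
Qed.

Lemma GG_card : #|GG T| = #|T|.
Proof. exact: card_in_imset gG_inj. Qed.

End SideB.

Lemma FFK (S : {set 'I_N.+2}) : in_Ped_od S -> GG (FF S) = S.
Proof.
move=> vS; have [o oS oLO] := exLO (ped_ex vS).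
have gFv := gF_val vS oS oLO; have vFe := vF_eq oS oLO.
have oo := oodd oLO; have o2 := o_ge2 vS oS oLO.
rewrite /GG /FF -imset_comp -[RHS]imset_id; apply: eq_in_imset => x xS /=.
apply: val_inj => /=; rewrite gG_val /vG gFv // vFe //.
have -> : isSE (FF S) (gF S x) = (x == o).
  apply/isSEP/idP => [[ex H]|/eqP ->].
    case: (eqVneq x o) => // xo'; exfalso.
    move: ex; rewrite gFv // vFe // (negbTE xo') => ex.
    have := ped_ord vS oS xS oo ex.
    have := H (gF S o) (imset_f _ oS); rewrite gFv // vFe // eqxx.
    move=> /(_ ltac:(lia)); rewrite gFv // vFe // (negbTE xo'); lia.
  rewrite gFv // vFe // eqxx; split; first lia.
  move=> z /(mem_FF vS oS oLO)[w wS ->] ez; rewrite (vFe _ wS) in ez *.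
  case: (eqVneq w o) => [_|wo]; first lia.
  move: ez; rewrite (negbTE wo) => ez; have := ped_ord vS oS wS oo ez; lia.
case: (eqVneq x o) => [->|//]; lia.
Qed.

Lemma GGK T : in_Ped_od T -> [exists y in T, ~~ odd y] -> FF (GG T) = T.
Proof.
move=> vT /exists_inP[y yT ey]; have [e eT eSE] := exSE (ex_intro2 _ _ y yT ey).
have ee := eeven eSE; have vGe := vG_eq eT eSE.
have vA := GG_ped vT eT eSE.
have eGG : gG T e \in GG T by exact: imset_f.
have eLO : isLO (GG T) (gG T e).
  apply/isLOP; rewrite gG_val vGe // eqxx; split; first by rewrite /= ee.
  move=> z /mem_GG[w wT ->]; rewrite vGe //; case: (eqVneq w e) => [_ _|we ow]; first lia.
  have := ped_ord vT wT eT ow ee; lia.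
have gFv := gF_val vA eGG eLO; have vFe := vF_eq eGG eLO.
rewrite /FF /GG -imset_comp -[RHS]imset_id; apply: eq_in_imset => x xT /=.
have xG : gG T x \in GG T by exact: imset_f.
apply: val_inj => /=; rewrite gFv // vFe //.
case: (eqVneq x e) => [->|xe]; first by rewrite eqxx gG_val vGe // eqxx.
have -> : (gG T x == gG T e) = false.
  apply/negP => /eqP /(congr1 (@nat_of_ord _)); rewrite !gG_val !vGe // eqxx (negbTE xe).
  move=> E; have ox : odd x by rewrite E /= ee.
  have := ped_ord vT xT eT ox ee; lia.
by rewrite gG_val vGe // (negbTE xe).
Qed.

Lemma countA m :
  #|[set S : {set 'I_N.+2} | in_Ped_od S & #|S| == m]| =
  #|[set T : {set 'I_N.+1} | (in_Ped_od T && (#|T| == m)) && [exists y in T, ~~ odd y]]|.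
Proof.
apply: (card_bij (f := FF) (g := GG)).
- move=> S; rewrite !inE => /andP[vS /eqP cS].
  have [o oS oLO] := exLO (ped_ex vS).
  by rewrite (FF_ped vS oS oLO) (FF_card vS oS oLO) cS eqxx (FF_even vS oS oLO).
- move=> T; rewrite !inE => /andP[/andP[vT /eqP cT] /exists_inP[y yT ey]].
  have [e eT eSE] := exSE (ex_intro2 _ _ y yT ey).
  by rewrite (GG_ped vT eT eSE) (GG_card vT eT eSE) cT eqxx.
- move=> S; rewrite !inE => /andP[vS _]; exact: FFK.
- move=> T; rewrite !inE => /andP[/andP[vT _] H]; exact: GGK.
Qed.

End Main.

Lemma countB N m : (1 <= m)%N ->
  p_ed_od m N =
  #|[set T : {set 'I_N.+1} | (in_Ped_od T && (#|T| == m)) && [exists y in T, ~~ odd y]]|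
  + D_o m N.
Proof.
move=> m1; rewrite /p_ed_od /D_o.
set B := [set S : {set 'I_N.+1} | in_Ped_od S & #|S| == m].
set P := [set T : {set 'I_N.+1} | [exists y in T, ~~ odd y]].
rewrite -(cardsID P B); congr (_ + _); apply: eq_card => T; rewrite !inE.
  by rewrite andbC.
apply/idP/idP.
- move=> /andP[/existsPn Hn /andP[vT cT]]; rewrite cT andbT.
  case/andP: vT => /andP[-> _] _ /=; apply/forall_inP => i iT.
  by move: (Hn i); rewrite iT /= negbK.
- move=> /and3P[dT /forall_inP Ho cT]; rewrite cT andbT.
  apply/andP; split.
    apply/existsPn => i; rewrite negb_and negbK; case: (boolP (i \in T)) => //= iT; exact: Ho.
  rewrite /in_Ped_od dT /=; apply/andP; split.
    apply/forall_inP => i iT; apply/forall_inP => j jT.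
    by rewrite (Ho j jT) /= implybT.
  have : (0 < #|T|)%N by rewrite (eqP cT).
  case/card_gt0P => x xT; apply/exists_inP; exists x => //; exact: Ho.
Qed.

Local Open Scope ring_scope.

Lemma final_int (a b c : nat) : b = (a + c)%N -> a%:Z - b%:Z = - c%:Z.
Proof. by move=> ->; rewrite PoszD GRing.opprD GRing.addrA GRing.subrr GRing.add0r. Qed.

Theorem mainTheorem6 (m n : nat) (hm : (1 <= m)%N) (hn : (1 <= n)%N) :
  (p_ed_od m (2 * n))%:Z - (p_ed_od m (2 * n - 1))%:Z
    = - (D_o m (2 * n - 1))%:Z.
Proof.
have oN : odd (2 * n - 1) by lia.
have e1 : (2 * n = (2 * n - 1).+1)%N by lia.
move: oN e1; set N := (2 * n - 1)%N => oN e1.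
apply: final_int; rewrite (countB N hm) e1.
have hA : p_ed_od m N.+1 = #|[set S : {set 'I_N.+2} | in_Ped_od S & #|S| == m]| by [].
by rewrite hA (countA oN m).
Qed.
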